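(* Let $K$ be a nonempty, compact and convex subset of a real Hausdorff locally convex topological vector space $X$, let $Y$ be a closed, convex, bounded and symmetric ($Y=-Y$) subset of a locally convex topological vector space, let $U\subseteq K$ be self-segment-dense in $K$ and suppose that $\operatorname{co}(U)$ is segment-dense in $K$. Let $f:K\times Y\to\mathbb R$ be bounded and satisfy: (i) for every $y\in Y$ the map $x\mapsto f(x,y)$ is convex and continuous on $K$; (ii) for every $x\in K$ the map $y\mapsto f(x,y)$ is affine and continuous on $Y$. Then $\{f(u,\cdot)\}_{u\in U}$ is dense in $\{f(x,\cdot)\}_{x\in K}$ in $B(Y)$; that is, for every $k\in K$ and $\varepsilon>0$ there exists $u\in U$ with $\sup_{y\in Y}|f(u,y)-f(k,y)|<\varepsilon$.
   Context: $B(Y)$ is the space of bounded real functions on $Y$ with the uniform norm. $\operatorname{co}$ is the convex hull. Affine: $f(x,(1-t)y_1+ty_2)=(1-t)f(x,y_1)+tf(x,y_2)$ for $y_1,y_2\in Y$, $t\in[0,1]$. $[x,y]=\{x+t(y-x):t\in[0,1]\}$. Self-segment-dense: for convex $V$ and $U\subseteq V$, $U$ is self-segment-dense in $V$ if $V\subseteq\operatorname{cl}U$ and for all $x,y\in U$, $[x,y]\cap U$ is dense in $[x,y]$. Segment-dense: for convex $V$ and $U\subseteq V$, $U$ is segment-dense in $V$ if for each $x\in V$ there is $y\in U$ such that $x$ is a cluster point of $[x,y]\cap U$. *)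

(* Defs.v *)
From Stdlib Require Import Reals List.
Open Scope R_scope.
Set Implicit Arguments.


Record TVS : Type := {
  tv :> Type;
  vadd : tv -> tv -> tv;
  vzero : tv;
  vopp : tv -> tv;
  vscal : R -> tv -> tv;
  vaddA : forall x y z, vadd x (vadd y z) = vadd (vadd x y) z;
  vaddC : forall x y, vadd x y = vadd y x;
  vadd0 : forall x, vadd x vzero = x;
  vaddN : forall x, vadd x (vopp x) = vzero;
  vscalA : forall a b x, vscal a (vscal b x) = vscal (a * b) x;
  vscal1 : forall x, vscal 1 x = x;
  vscalDr : forall a x y, vscal a (vadd x y) = vadd (vscal a x) (vscal a y);
  vscalDl : forall a b x, vscal (a + b) x = vadd (vscal a x) (vscal b x);
  vopen : (tv -> Prop) -> Prop;
  vopen_full : vopen (fun _ => True);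
  vopen_inter : forall A B, vopen A -> vopen B -> vopen (fun x => A x /\ B x);
  vopen_union : forall F : (tv -> Prop) -> Prop,
      (forall A, F A -> vopen A) -> vopen (fun x => exists A, F A /\ A x);
  vadd_cont : forall x y W, vopen W -> W (vadd x y) ->
      exists U V, vopen U /\ vopen V /\ U x /\ V y /\
        forall a b, U a -> V b -> W (vadd a b);
  vscal_cont : forall t x W, vopen W -> W (vscal t x) ->
      exists d U, 0 < d /\ vopen U /\ U x /\
        forall s a, Rabs (s - t) < d -> U a -> W (vscal s a)
}.

Arguments vadd {_}. Arguments vscal {_}. Arguments vopp {_}. Arguments vzero {_}. Arguments vopen {_}.
Section Defs.
Context {X : TVS}.

Definition subset (A B : X -> Prop) := forall x, A x -> B x.

Definition comb (t : R) (x y : X) : X :=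
  vadd (vscal (1 - t) x) (vscal t y).

Definition tv_convex (C : X -> Prop) :=
  forall x y t, C x -> C y -> 0 <= t <= 1 -> C (comb t x y).

Definition co (U : X -> Prop) : X -> Prop :=
  fun z => forall C, tv_convex C -> subset U C -> C z.

Definition segment (x y : X) : X -> Prop :=
  fun z => exists t, 0 <= t <= 1 /\ z = vadd x (vscal t (vadd y (vopp x))).

Definition tv_closure (A : X -> Prop) : X -> Prop :=
  fun x => forall W, vopen W -> W x -> exists a, W a /\ A a.

Definition tv_closed (A : X -> Prop) := vopen (fun x => ~ A x).

Definition cluster_point (A : X -> Prop) (x : X) :=
  forall W, vopen W -> W x -> exists a, W a /\ A a /\ a <> x.

Definition dense_in (A S : X -> Prop) := subset S (tv_closure A).

Definition self_segment_dense (U V : X -> Prop) :=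
  subset U V /\ subset V (tv_closure U) /\
  forall x y, U x -> U y ->
    dense_in (fun z => segment x y z /\ U z) (segment x y).

Definition segment_dense (U V : X -> Prop) :=
  subset U V /\
  forall x, V x -> exists y, U y /\
    cluster_point (fun z => segment x y z /\ U z) x.

Definition tv_compact (K : X -> Prop) :=
  forall (I : Type) (O : I -> X -> Prop),
    (forall i, vopen (O i)) -> (forall x, K x -> exists i, O i x) ->
    exists l : list I, forall x, K x -> exists i, In i l /\ O i x.

Definition hausdorff :=
  forall x y : X, x <> y -> exists U V, vopen U /\ vopen V /\ U x /\ V y /\
    forall z, ~ (U z /\ V z).

Definition locally_convex :=
  forall x W, vopen W -> W x -> exists V, vopen V /\ tv_convex V /\ V x /\ subset V W.

Definition tv_bounded (Y : X -> Prop) :=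
  forall W, vopen W -> W vzero ->
    exists s, 0 < s /\ forall t, s < t -> forall y, Y y ->
      exists w, W w /\ y = vscal t w.

Definition tv_symmetric (Y : X -> Prop) := forall y, Y y -> Y (vopp y).

End Defs.
Arguments vadd {_}. Arguments vscal {_}. Arguments vopp {_}. Arguments vzero {_}. Arguments vopen {_}.
Arguments hausdorff X : clear implicits. Arguments locally_convex X : clear implicits.

Definition cont_on {X : TVS} (A : X -> Prop) (g : X -> R) :=
  forall x, A x -> forall eps, 0 < eps -> exists W, vopen W /\ W x /\
    forall x', A x' -> W x' -> Rabs (g x' - g x) < eps.

(* Main.v *)
Require Import Defs.
From Stdlib Require Import Reals Lra List Classical.
Open Scope R_scope.

Lemma rle (x a : R) : Rabs x <= a -> - a <= x <= a.
Proof. unfold Rabs; destruct (Rcase_abs x); lra. Qed.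

Arguments vaddA {_}. Arguments vaddC {_}. Arguments vadd0 {_}. Arguments vaddN {_}.
Arguments vscalA {_}. Arguments vscal1 {_}. Arguments vscalDr {_}. Arguments vscalDl {_}.
Section V.
Variable X : TVS.
Implicit Types x y z : X.

Lemma vadd0l x : vadd vzero x = x.
Proof. rewrite vaddC; apply vadd0. Qed.

Lemma vadd_cancel (a x y : X) : vadd a x = vadd a y -> x = y.
Proof.
  intro H. rewrite <- (vadd0l x), <- (vadd0l y).
  rewrite <- (vaddN a), (vaddC a (vopp a)), <- !vaddA, H; reflexivity.
Qed.

Lemma vscal0 x : vscal 0 x = vzero.
Proof.
  apply (vadd_cancel (vscal 0 x)). rewrite vadd0, <- vscalDl.
  f_equal; ring.
Qed.

Lemma vscal_zero r : vscal r (@vzero X) = vzero.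
Proof. rewrite <- (vscal0 (@vzero X)), vscalA; f_equal; ring. Qed.

Lemma vopp_scal x : vopp x = vscal (-1) x.
Proof.
  apply (vadd_cancel x). rewrite vaddN. rewrite <- (vscal1 x) at 1.
  rewrite <- vscalDl. replace (1 + -1) with 0 by ring. now rewrite vscal0.
Qed.

Lemma vadd_ACA (a b c d : X) : vadd (vadd a b) (vadd c d) = vadd (vadd a c) (vadd b d).
Proof.
  rewrite <- !vaddA; f_equal. rewrite !vaddA; f_equal; apply vaddC.
Qed.

Fixpoint lc (l : list X) (c : nat -> R) : X :=
  match l with nil => vzero | x :: l' => vadd (vscal (c O) x) (lc l' (fun k => c (S k))) end.

Lemma lc_ext l : forall c1 c2, (forall k, c1 k = c2 k) -> lc l c1 = lc l c2.
Proof. induction l; intros; simpl; auto. rewrite H; f_equal; apply IHl; auto. Qed.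

Lemma lc_add l : forall c1 c2, lc l (fun k => c1 k + c2 k) = vadd (lc l c1) (lc l c2).
Proof.
  induction l; intros; simpl. now rewrite vadd0.
  rewrite vadd_ACA, <- vscalDl; f_equal. apply (IHl (fun k => c1 (S k)) (fun k => c2 (S k))).
Qed.

Lemma lc_scal r l : forall c, lc l (fun k => r * c k) = vscal r (lc l c).
Proof.
  induction l; intros; simpl. now rewrite vscal_zero.
  rewrite vscalDr, vscalA; f_equal. apply (IHl (fun k => c (S k))).
Qed.

Lemma lc_zero l : lc l (fun _ => 0) = vzero.
Proof. induction l; simpl; auto. now rewrite IHl, vscal0, vadd0. Qed.

Lemma lc_atom l : forall n, lc l (fun k => if Nat.eqb n k then 1 else 0) = nth n l vzero.
Proof.
  induction l; intros; simpl. destruct n; auto.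
  destruct n; simpl.
  - rewrite vscal1. now rewrite lc_zero, vadd0.
  - rewrite vscal0, vadd0l. apply IHl.
Qed.

Inductive ex : Type := At : nat -> ex | Ad : ex -> ex -> ex | Sc : R -> ex -> ex | Op : ex -> ex | Ze : ex.

Fixpoint ev (l : list X) (e : ex) : X :=
  match e with
  | At n => nth n l vzero
  | Ad a b => vadd (ev l a) (ev l b)
  | Sc r a => vscal r (ev l a)
  | Op a => vopp (ev l a)
  | Ze => vzero end.

Fixpoint cf (e : ex) (k : nat) : R :=
  match e with
  | At n => if Nat.eqb n k then 1 else 0
  | Ad a b => cf a k + cf b k
  | Sc r a => r * cf a k
  | Op a => - cf a k
  | Ze => 0 end.

Lemma ev_lc l e : ev l e = lc l (cf e).
Proof.
  induction e; simpl.
  - now rewrite lc_atom.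
  - now rewrite lc_add, IHe1, IHe2.
  - now rewrite lc_scal, IHe.
  - rewrite IHe, vopp_scal, <- lc_scal. apply lc_ext; intros; ring.
  - now rewrite lc_zero.
Qed.

Lemma ev_eq l e1 e2 : (forall k, cf e1 k = cf e2 k) -> ev l e1 = ev l e2.
Proof. intros; rewrite !ev_lc; now apply lc_ext. Qed.

End V.
Arguments ev {X}. Arguments lc {X}.

Ltac idx x l :=
  lazymatch l with
  | cons x _ => constr:(O)
  | cons _ ?t => let n := idx x t in constr:(S n)
  end.

Ltac reify l e :=
  lazymatch e with
  | vadd ?a ?b => let ra := reify l a in let rb := reify l b in constr:(Ad ra rb)
  | vscal ?r ?a => let ra := reify l a in constr:(Sc r ra)
  | vopp ?a => let ra := reify l a in constr:(Op ra)
  | vzero => constr:(Ze)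
  | comb ?t ?a ?b => let ra := reify l a in let rb := reify l b in
       constr:(Ad (Sc (1 - t) ra) (Sc t rb))
  | _ => let n := idx e l in constr:(At n)
  end.

Ltac vec l :=
  lazymatch goal with
  | |- @eq _ ?lhs ?rhs =>
    let a := reify l lhs in let b := reify l rhs in
    change (ev l a = ev l b); apply ev_eq;
    let k := fresh "k" in intros [|[|[|[|[|k]]]]]; simpl; try ring
  end.


Lemma comb_neq (X : TVS) (x z : X) s : s <> 0 -> comb s x z = x -> z = x.
Proof.
  intros Hs H.
  assert (E : z = vadd (vscal (/s) (comb s x z)) (vscal (-(1-s)/s) x)).
  { vec (x :: z :: nil). all: field; auto. }
  rewrite H in E. rewrite E. vec (x :: nil). all: field; auto.
Qed.

Lemma sep_param (X : TVS) (HX : hausdorff X) (HL : locally_convex X) (x z : X) d :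
  x <> z -> 0 < d <= 1 ->
  exists V, vopen V /\ V x /\ forall t, 0 <= t <= 1 -> V (comb t x z) -> t < d.
Proof.
  intros H Hd. set (p := comb d x z).
  assert (Hp : p <> x).
  { intro E. apply H. symmetry. apply (comb_neq X x z d); [lra|exact E]. }
  destruct (HX x p (not_eq_sym Hp)) as (U1 & U2 & oU1 & oU2 & U1x & U2p & disj).
  destruct (HL x U1 oU1 U1x) as (V & oV & cV & Vx & sub).
  exists V. split; [|split]; auto. intros t Ht Vt.
  destruct (Rlt_or_le t d) as [|Hle]; auto. exfalso.
  set (q := d / t). assert (Hq : q * t = d) by (unfold q; field; lra).
  assert (V p).
  { replace p with (comb q x (comb t x z)).
    apply cV; auto. split; nra.
    unfold p. vec (x :: z :: nil). all: nra. }
  apply (disj p); split; auto.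
Qed.

Definition step {X : TVS} (K : X -> Prop) (z w : X) (s : R) :=
  exists s1 s2 r r', 0 <= s1 <= s /\ s1 <= 1 /\ 0 <= s2 <= s /\ s2 <= 1 /\
    K r /\ K r' /\ w = comb s1 z r /\ z = comb s2 w r'.

Inductive chain {X : TVS} (K : X -> Prop) : X -> X -> R -> Prop :=
| ch0 : forall x, chain K x x 0
| chS : forall x z w s1 s2, chain K x z s1 -> step K z w s2 -> chain K x w (s1 + s2).

Lemma step_mapr (X : TVS) (K : X -> Prop) b t z w s :
  tv_convex K -> K b -> 0 <= t <= 1 -> step K z w s -> step K (comb t z b) (comb t w b) s.
Proof.
  intros HK Kb Ht (s1 & s2 & r & r' & H1 & H2 & H3 & H4 & Kr & Kr' & E1 & E2).
  exists s1, s2, (comb t r b), (comb t r' b).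
  do 4 (split; [assumption|]). split; [apply HK; auto|]. split; [apply HK; auto|].
  split.
  - rewrite E1. vec (z :: r :: b :: nil).
  - rewrite E2 at 1. vec (w :: r' :: b :: nil).
Qed.

Lemma step_mapl (X : TVS) (K : X -> Prop) b t z w s :
  tv_convex K -> K b -> 0 <= t <= 1 -> step K z w s -> step K (comb t b z) (comb t b w) s.
Proof.
  intros HK Kb Ht (s1 & s2 & r & r' & H1 & H2 & H3 & H4 & Kr & Kr' & E1 & E2).
  exists s1, s2, (comb t b r), (comb t b r').
  do 4 (split; [assumption|]). split; [apply HK; auto|]. split; [apply HK; auto|].
  split.
  - rewrite E1. vec (z :: r :: b :: nil).
  - rewrite E2 at 1. vec (w :: r' :: b :: nil).
Qed.

Lemma chain_mapr (X : TVS) (K : X -> Prop) b t x w s :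
  tv_convex K -> K b -> 0 <= t <= 1 -> chain K x w s -> chain K (comb t x b) (comb t w b) s.
Proof.
  intros HK Kb Ht H. induction H. constructor.
  eapply chS; eauto. apply step_mapr; auto.
Qed.

Lemma chain_mapl (X : TVS) (K : X -> Prop) b t x w s :
  tv_convex K -> K b -> 0 <= t <= 1 -> chain K x w s -> chain K (comb t b x) (comb t b w) s.
Proof.
  intros HK Kb Ht H. induction H. constructor.
  eapply chS; eauto. apply step_mapl; auto.
Qed.

Lemma chain_trans (X : TVS) (K : X -> Prop) x z w a b :
  chain K x z a -> chain K z w b -> chain K x w (a + b).
Proof.
  intros H1 H2. induction H2.
  - replace (a + 0) with a by ring. auto.
  - replace (a + (s1 + s2)) with ((a + s1) + s2) by ring. eapply chS; eauto.
Qed.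

Lemma chain_bound (X Z : TVS) (K : X -> Prop) (Y : Z -> Prop) (f : X -> Z -> R) M
  (HK : tv_convex K)
  (Hcv : forall y, Y y -> forall x1 x2 t, K x1 -> K x2 -> 0 <= t <= 1 ->
      f (comb t x1 x2) y <= (1 - t) * f x1 y + t * f x2 y)
  (HM : forall x y, K x -> Y y -> Rabs (f x y) <= M) x w s :
  chain K x w s -> K x -> K w /\ forall y, Y y -> Rabs (f w y - f x y) <= 2 * M * s.
Proof.
  intros H Kx. induction H.
  - split; auto. intros. replace (f x y - f x y) with 0 by ring. rewrite Rabs_R0.
    pose proof (HM x y Kx H). pose proof (Rabs_pos (f x y)). lra.
  - destruct (IHchain Kx) as [Kz Bz].
    destruct H0 as (a1 & a2 & r & r' & H1 & H2 & H3 & H4 & Kr & Kr' & E1 & E2).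
    assert (Kw : K w) by (rewrite E1; apply HK; auto; lra).
    split; auto. intros y Hy.
    pose proof (Hcv y Hy z r a1 Kz Kr ltac:(lra)) as C1. rewrite <- E1 in C1.
    pose proof (Hcv y Hy w r' a2 Kw Kr' ltac:(lra)) as C2. rewrite <- E2 in C2.
    pose proof (rle _ _ (HM z y Kz Hy)). pose proof (rle _ _ (HM w y Kw Hy)).
    pose proof (rle _ _ (HM r y Kr Hy)). pose proof (rle _ _ (HM r' y Kr' Hy)).
    pose proof (rle _ _ (Bz y Hy)).
    assert (A1 : a1 * (f r y - f z y) <= a1 * (2 * M)) by (apply Rmult_le_compat_l; lra).
    assert (A2 : a2 * (f r' y - f w y) <= a2 * (2 * M)) by (apply Rmult_le_compat_l; lra).
    assert (A3 : a1 * (2 * M) <= s2 * (2 * M)) by (apply Rmult_le_compat_r; lra).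
    assert (A4 : a2 * (2 * M) <= s2 * (2 * M)) by (apply Rmult_le_compat_r; lra).
    apply Rabs_le. split; nra.
Qed.

Definition good {X : TVS} (K U : X -> Prop) (x : X) :=
  K x /\ forall e, 0 < e -> exists u s, U u /\ chain K x u s /\ s < e.

Lemma seg_approx (X : TVS) (HX : hausdorff X) (HL : locally_convex X) (K U : X -> Prop)
  (HUK : subset U K)
  (Hd : forall x y, U x -> U y -> dense_in (fun z => segment x y z /\ U z) (segment x y))
  ua ub t sg : U ua -> U ub -> 0 <= t <= 1 -> 0 < sg ->
  exists v s, U v /\ chain K (comb t ua ub) v s /\ s <= sg.
Proof.
  intros Ua Ub Ht Hsg.
  destruct (Req_dec t 0) as [->|Ht0].
  { exists ua, 0. split; auto. split; [|lra].
    replace (comb 0 ua ub) with ua by vec (ua :: ub :: nil). constructor. }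
  destruct (Req_dec t 1) as [->|Ht1].
  { exists ub, 0. split; auto. split; [|lra].
    replace (comb 1 ua ub) with ub by vec (ua :: ub :: nil). constructor. }
  destruct (classic (ua = ub)) as [<-|Hne].
  { exists ua, 0. split; auto. split; [|lra].
    replace (comb t ua ua) with ua by vec (ua :: nil). constructor. }
  set (sp := Rmin sg 1).
  assert (Hsp : 0 < sp <= sg /\ sp <= 1).
  { unfold sp. split; [split|]. apply Rmin_glb_lt; lra. apply Rmin_l. apply Rmin_r. }
  assert (Hcb : comb t ua ub <> ub).
  { intro E. apply Hne. apply (comb_neq X ub ua (1 - t)); [lra|].
    transitivity (comb t ua ub); [vec (ub :: ua :: nil)|exact E]. }
  assert (Hca : comb t ua ub <> ua).
  { intro E. apply not_eq_sym in Hne. apply Hne. apply (comb_neq X ua ub t); auto. }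
  destruct (sep_param X HX HL _ _ (sp * t) Hcb ltac:(split; nra)) as (V1 & oV1 & V1c & HV1).
  destruct (sep_param X HX HL _ _ (sp * (1 - t)) Hca ltac:(split; nra)) as (V2 & oV2 & V2c & HV2).
  assert (Hseg : segment ua ub (comb t ua ub)).
  { exists t. split; [lra|]. vec (ua :: ub :: nil). }
  destruct (Hd ua ub Ua Ub _ Hseg (fun x => V1 x /\ V2 x) (vopen_inter _ _ _ oV1 oV2) (conj V1c V2c))
    as (w & [V1w V2w] & [(tau & Htau & Ew) Uw]).
  assert (Ew' : w = comb tau ua ub) by (rewrite Ew; vec (ua :: ub :: nil)).
  exists w, (0 + sp). split; auto. split; [|lra].
  eapply chS; [apply ch0|].
  destruct (Rle_or_lt t tau) as [Hle|Hlt].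
  - set (s1 := (tau - t) / (1 - t)). assert (E1 : s1 * (1 - t) = tau - t) by (unfold s1; field; lra).
    assert (Hs1 : 0 <= s1 <= 1) by (split; nra).
    assert (Ew1 : w = comb s1 (comb t ua ub) ub) by (rewrite Ew'; vec (ua :: ub :: nil); nra).
    assert (L1 : s1 < sp * t) by (apply HV1; auto; rewrite <- Ew1; auto).
    set (s2 := (tau - t) / tau). assert (E2 : s2 * tau = tau - t) by (unfold s2; field; lra).
    assert (Ec : comb t ua ub = comb s2 w ua) by (rewrite Ew'; vec (ua :: ub :: nil); nra).
    exists s1, s2, ub, ua. repeat split; try nra; auto.
  - set (s1 := (t - tau) / t). assert (E1 : s1 * t = t - tau) by (unfold s1; field; lra).
    assert (Hs1 : 0 <= s1 <= 1) by (split; nra).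
    assert (Ew1 : w = comb s1 (comb t ua ub) ua) by (rewrite Ew'; vec (ua :: ub :: nil); nra).
    assert (L1 : s1 < sp * (1 - t)) by (apply HV2; auto; rewrite <- Ew1; auto).
    set (s2 := (t - tau) / (1 - tau)). assert (E2 : s2 * (1 - tau) = t - tau) by (unfold s2; field; lra).
    assert (Ec : comb t ua ub = comb s2 w ub) by (rewrite Ew'; vec (ua :: ub :: nil); nra).
    exists s1, s2, ua, ub. repeat split; try nra; auto.
Qed.

Lemma good_convex (X : TVS) (HX : hausdorff X) (HL : locally_convex X) (K U : X -> Prop)
  (HK : tv_convex K) (HUK : subset U K)
  (Hd : forall x y, U x -> U y -> dense_in (fun z => segment x y z /\ U z) (segment x y)) :
  tv_convex (good K U).
Proof.
  intros a b t [Ka Ga] [Kb Gb] Ht. split; [apply HK; auto|]. intros e He.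
  destruct (Ga (e/3) ltac:(lra)) as (ua & sa & Ua & Ca & Hsa).
  destruct (Gb (e/3) ltac:(lra)) as (ub & sb & Ub & Cb & Hsb).
  destruct (seg_approx X HX HL K U HUK Hd ua ub t (e/4) Ua Ub Ht ltac:(lra)) as (v & s & Uv & Cv & Hs).
  exists v, (sa + sb + s). split; auto. split; [|lra].
  apply chain_trans with (comb t ua ub); auto.
  apply chain_trans with (comb t ua b).
  - apply chain_mapr; auto.
  - apply chain_mapl; auto.
Qed.

Theorem mainTheorem18 (X Z : TVS) (K : X -> Prop) (Y : Z -> Prop) (U : X -> Prop)
  (f : X -> Z -> R)
  (HX : hausdorff X) (HXlc : locally_convex X)
  (HKne : exists k, K k) (HKc : tv_compact K) (HKcv : tv_convex K)
  (HZlc : locally_convex Z)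
  (HYcl : tv_closed Y) (HYcv : tv_convex Y) (HYb : tv_bounded Y) (HYs : tv_symmetric Y)
  (HU : self_segment_dense U K) (HcoU : segment_dense (co U) K)
  (Hfb : exists M, forall x y, K x -> Y y -> Rabs (f x y) <= M)
  (Hfx : forall y, Y y ->
     (forall x1 x2 t, K x1 -> K x2 -> 0 <= t <= 1 ->
        f (comb t x1 x2) y <= (1 - t) * f x1 y + t * f x2 y)
     /\ cont_on K (fun x => f x y))
  (Hfy : forall x, K x ->
     (forall y1 y2 t, Y y1 -> Y y2 -> 0 <= t <= 1 ->
        f x (comb t y1 y2) = (1 - t) * f x y1 + t * f x y2)
     /\ cont_on Y (fun y => f x y)) :
  forall k, K k -> forall eps, 0 < eps ->
    exists u, U u /\ exists d, d < eps /\
      forall y, Y y -> Rabs (f u y - f k y) <= d.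
Proof.
  intros k Hk eps Heps.
  destruct HU as (HUK & HKU & HUd).
  destruct HcoU as (HcoK & Hseg).
  destruct (classic (exists y, Y y)) as [[y1 Hy1]|HYe].
  2: { destruct (HKU k Hk (fun _ => True) (vopen_full _) I) as (u & _ & Hu).
       exists u; split; auto. exists (eps/2); split; [lra|].
       intros y Hy; exfalso; eauto. }
  destruct Hfb as (M & HM).
  assert (HM0 : 0 <= M) by (pose proof (HM k y1 Hk Hy1); pose proof (Rabs_pos (f k y1)); lra).
  set (M1 := M + 1).
  assert (Y0 : Y vzero).
  { replace (@vzero Z) with (comb (/2) y1 (vopp y1)) by (vec (y1 :: nil); field).
    apply HYcv; auto; lra. }
  assert (Hcv : forall y, Y y -> forall x1 x2 t, K x1 -> K x2 -> 0 <= t <= 1 ->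
      f (comb t x1 x2) y <= (1 - t) * f x1 y + t * f x2 y) by (intros y Hy; apply (Hfx y Hy)).
  assert (Hmid : forall x y, K x -> Y y -> f x vzero = /2 * f x y + /2 * f x (vopp y)).
  { intros x y Kx Hy.
    pose proof (proj1 (Hfy x Kx) y (vopp y) (/2) Hy (HYs y Hy) ltac:(lra)) as H1.
    replace (comb (/2) y (vopp y)) with (@vzero Z) in H1 by (vec (y :: nil); field).
    rewrite H1; field. }
  destruct (Hseg k Hk) as (y0 & Hy0co & Hcl).
  assert (Ky0 : K y0) by (apply HcoK; auto).
  assert (Hky0 : k <> y0).
  { intro E; subst y0.
    destruct (Hcl (fun _ => True) (vopen_full _) I) as (a & _ & [(t & _ & Ea) _] & Hne).
    apply Hne. rewrite Ea. vec (k :: nil). }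
  destruct (proj2 (Hfx vzero Y0) k Hk (eps/8) ltac:(lra)) as (Wh & oWh & Whk & HWh).
  assert (HM1 : 0 < M1) by (unfold M1; lra).
  set (dl := Rmin 1 (eps / (8 * M1))).
  assert (Hdl : 0 < dl <= 1 /\ dl <= eps / (8 * M1)).
  { unfold dl. split; [split|]. apply Rmin_glb_lt; [lra|]. apply Rdiv_lt_0_compat; lra.
    apply Rmin_l. apply Rmin_r. }
  destruct (sep_param X HX HXlc k y0 dl Hky0 ltac:(lra)) as (V & oV & Vk & HV).
  destruct (Hcl (fun x => Wh x /\ V x) (vopen_inter _ _ _ oWh oV) (conj Whk Vk))
    as (c & [Whc Vc] & [(tau & Htau & Ec) Hcoc] & _).
  assert (Ec' : c = comb tau k y0) by (rewrite Ec; vec (k :: y0 :: nil)).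
  assert (Htd : tau < dl) by (apply HV; auto; rewrite <- Ec'; auto).
  assert (Kc : K c) by (apply HcoK; auto).
  assert (Gc : good K U c).
  { apply Hcoc. apply good_convex; auto.
    intros u Hu. split; auto. intros e He. exists u, 0. split; auto. split; [constructor|lra]. }
  destruct Gc as [_ Gc].
  destruct (Gc (eps / (8 * M1))) as (u & s & Uu & Cu & Hs).
  { apply Rdiv_lt_0_compat; lra. }
  destruct (chain_bound X Z K Y f M HKcv Hcv HM c u s Cu Kc) as [Ku Bu].
  assert (Hs0 : 0 <= s).
  { clear -Cu. induction Cu; [lra|].
    destruct H as (a1 & a2 & _ & _ & H1 & _). destruct H1 as [H1a H1b]. pose proof (Rle_trans _ _ _ H1a H1b). apply Rplus_le_le_0_compat; auto. }
  assert (E8 : M1 * (eps / (8 * M1)) = eps / 8) by (field; lra).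
  assert (A4 : 2 * M * tau <= eps / 4).
  { assert (M * tau <= M1 * (eps / (8 * M1))).
    { assert (M <= M1) by (unfold M1; lra). apply Rmult_le_compat; lra. } lra. }
  assert (A5 : 2 * M * s <= eps / 4).
  { assert (M * s <= M1 * (eps / (8 * M1))).
    { assert (M <= M1) by (unfold M1; lra). apply Rmult_le_compat; lra. } lra. }
  exists u. split; auto. exists (3 * eps / 4). split; [lra|].
  intros y Hy.
  assert (Hy' : Y (vopp y)) by (apply HYs; auto).
  pose proof (Hcv y Hy k y0 tau Hk Ky0 ltac:(lra)) as C1. rewrite <- Ec' in C1.
  pose proof (Hcv (vopp y) Hy' k y0 tau Hk Ky0 ltac:(lra)) as C2. rewrite <- Ec' in C2.
  pose proof (Hmid c y Kc Hy). pose proof (Hmid k y Hk Hy).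
  pose proof (Rabs_def2 _ _ (HWh c Kc Whc)) as Hh. simpl in Hh.
  pose proof (rle _ _ (HM k y Hk Hy)). pose proof (rle _ _ (HM y0 y Ky0 Hy)).
  pose proof (rle _ _ (HM k (vopp y) Hk Hy')). pose proof (rle _ _ (HM y0 (vopp y) Ky0 Hy')).
  pose proof (rle _ _ (Bu y Hy)).
  assert (A1 : tau * (f y0 y - f k y) <= tau * (2 * M)) by (apply Rmult_le_compat_l; lra).
  assert (A2 : tau * (f y0 (vopp y) - f k (vopp y)) <= tau * (2 * M)) by (apply Rmult_le_compat_l; lra).
  apply Rabs_le. split; nra.
Qed.
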